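(* Let $\Sigma$ and $Q$ be $p\times p$ symmetric positive definite matrices and $A$ a $p\times p$ matrix. Then $A\Sigma=\Sigma A^\top$ and $QA=A^\top Q$ both hold if and only if there exists a nonsingular matrix $B$ such that $Q=B^\top B$, $\Sigma=B^{-1}D(B^\top)^{-1}$ and $A=B^{-1}A^*B$, where $D$ and $A^*$ are diagonal matrices whose diagonal elements are, respectively, the eigenvalues of $\Sigma Q$ and of $A$. *)

(* Defs.v *)
From mathcomp Require Import all_boot all_order all_algebra.
From mathcomp Require Import reals.
Set Implicit Arguments. Unset Strict Implicit. Unset Printing Implicit Defensive.
Import Order.TTheory GRing.Theory Num.Theory.
Local Open Scope ring_scope.

Definition symmetric_mx (R : realType) (p : nat) (M : 'M[R]_p) : Prop :=
  M^T = M.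

Definition spd_mx (R : realType) (p : nat) (M : 'M[R]_p) : Prop :=
  symmetric_mx M /\
  forall x : 'cV[R]_p, x != 0 -> 0 < (x^T *m M *m x) 0 0.

(* D is a diagonal matrix whose diagonal entries are the eigenvalues of M,
   counted with (algebraic) multiplicity, i.e. the characteristic polynomial
   of M is prod_i (X - D_ii). *)
Definition diag_eigen_mx (R : realType) (p : nat) (M D : 'M[R]_p) : Prop :=
  is_diag_mx D /\ char_poly M = \prod_(i < p) ('X - (D i i)%:P).

(* Main.v *)
Require Import Defs.
From mathcomp Require Import all_boot all_order all_algebra.
From mathcomp Require Import reals.
From mathcomp Require Import complex.
Import Order.TTheory GRing.Theory Num.Theory.
Local Open Scope ring_scope.
Set Implicit Arguments. Unset Strict Implicit. Unset Printing Implicit Defensive.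

Section Spec.
Variable R : realType.
Local Notation toC := (real_complex R).

Lemma eig_real n (S : 'M[R]_n) : S^T = S -> forall lam : R[i],
  eigenvalue (map_mx toC S) lam -> exists r : R, lam = toC r.
Proof.
move=> hS lam /eigenvalueP [v hv v0].
set SC := map_mx toC S in hv.
have herm : SC \is hermsymmx.
  apply: realsym_hermsym.
    apply/is_hermitianmxP; rewrite expr0 scale1r map_mx_id // /SC.
    by rewrite map_trmx hS.
  apply/mxOverP => i j; rewrite /SC mxE; apply/complex_realP; by exists (S i j).
have /hermitian_normalmx /orthomx_spectralP hSC := herm.
have Pu := spectral_unit SC.
set P := spectralmx SC in hSC Pu.
set d := spectral_diag SC in hSC.
have [w wdef] : {w | w = v *m invmx P} by exists (v *m invmx P).
have w0 : w != 0 by rewrite wdef mulmx_free_eq0 ?row_free_unit ?unitmx_inv.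
have hw : w *m diag_mx d = lam *: w.
  have := congr1 (mulmx^~ (invmx P)) hv.
  rewrite {1}hSC !mulmxA mulmxK // -scalemxAl wdef => <- //.
have [j wj] : exists j, w 0 j != 0.
  apply/existsP; rewrite -negb_forall; apply: contra w0 => /forallP h.
  apply/eqP/rowP => j; apply/eqP; rewrite [X in _ == X]mxE; exact: h j.
have : (w *m diag_mx d) 0 j = (lam *: w) 0 j by rewrite hw.
rewrite mul_mx_diag !mxE mulrC => hh; have dj := mulIf wj hh.
have : d 0 j \is Num.real.
  by have /mxOverP := hermitian_spectral_diag_real herm; apply.
rewrite dj => /complex_realP [r ->]; by exists r.
Qed.

Lemma eig_sub n m (S : 'M[R]_n) (W : 'M[R]_(m,n)) : S^T = S -> W != 0 ->
  (W *m S <= W)%MS ->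
  exists x : 'rV_n, [/\ x != 0, (x <= W)%MS & exists r, x *m S = r *: x].
Proof.
move=> hS W0 hWS.
have r0pos : (0 < \rank W)%N by rewrite lt0n mxrank_eq0.
set B := row_base W.
have eqB : (B :=: W)%MS := eq_row_base W.
have BS : (B *m S <= B)%MS by rewrite (eqmxMr S eqB) eqB.
pose S' := B *m S *m pinvmx B.
have hS' : S' *m B = B *m S by rewrite mulmxKpV.
have Bfree : row_free B := row_base_free W.
have [lam hlam] := eigenvalue_closed (map_mx toC S') r0pos.
have : eigenvalue (map_mx toC S) lam.
  move/eigenvalueP: hlam => [y hy y0]; apply/eigenvalueP; exists (y *m map_mx toC B).
    by rewrite -mulmxA -map_mxM -hS' map_mxM mulmxA hy -scalemxAl.
  by rewrite mulmx_free_eq0 // row_free_map.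
move/(eig_real hS) => [r hr].
have : eigenvalue S' r.
  by rewrite eigenvalue_root_char -(fmorph_root toC) map_char_poly -eigenvalue_root_char; move: hlam; rewrite hr.
move/eigenvalueP => [y hy y0].
exists (y *m B); split.
- by rewrite mulmx_free_eq0.
- by rewrite -eqB submxMl.
- by exists r; rewrite -mulmxA -hS' mulmxA hy scalemxAl.
Qed.

Lemma common_eig n m (S M : 'M[R]_n) (W : 'M[R]_(m,n)) : S^T = S -> M^T = M ->
  S *m M = M *m S -> W != 0 -> (W *m S <= W)%MS -> (W *m M <= W)%MS ->
  exists x : 'rV_n, [/\ x != 0, (x <= W)%MS, exists a, x *m S = a *: x
     & exists b, x *m M = b *: x].
Proof.
move=> hS hM hSM W0 hWS hWM.
have [x0 [x00 x0W [a hx0]]] := eig_sub hS W0 hWS.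
pose W' := (W :&: eigenspace S a)%MS.
have W'0 : W' != 0.
  apply: contra x00 => /eqP W'0; rewrite -submx0 -W'0 sub_capmx x0W /=.
  exact/eigenspaceP.
have hW'M : (W' *m M <= W')%MS.
  rewrite sub_capmx; apply/andP; split.
    exact: submx_trans (submxMr M (capmxSl _ _)) hWM.
  apply: submx_trans (submxMr M (capmxSr _ _)) _.
  exact: comm_mx_stable_eigenspace.
have [x [x0' xW' [b hx]]] := eig_sub hM W'0 hW'M.
exists x; split => //.
- exact: submx_trans xW' (capmxSl _ _).
- exists a; apply/eigenspaceP; exact: submx_trans xW' (capmxSr _ _).
- by exists b.
Qed.

Lemma dot_pos n (x : 'rV[R]_n) : x != 0 -> 0 < (x *m x^T) 0 0.
Proof.
move=> x0.
have -> : (x *m x^T) 0 0 = \sum_j x 0 j ^+ 2.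
  by rewrite mxE; apply: eq_bigr => j _; rewrite mxE expr2.
rewrite lt_def sumr_ge0 ?andbT => [|j _]; last exact: sqr_ge0.
apply: contra x0 => /eqP /psumr_eq0P h; apply/eqP/rowP => j.
have /eqP := h (fun i _ => sqr_ge0 _) j isT; rewrite sqrf_eq0 mxE => /eqP //.
Qed.

Lemma onb n (S M : 'M[R]_n) : S^T = S -> M^T = M -> S *m M = M *m S ->
  forall k, (k <= n)%N -> exists (V : 'M[R]_(k,n)) (a b : 'rV[R]_k),
  [/\ V *m V^T = 1%:M, V *m S = diag_mx a *m V & V *m M = diag_mx b *m V].
Proof.
move=> hS hM hSM; elim => [|k IH] hk.
  exists 0, 0, 0; split; apply/matrixP => i; by case: i.
have [V [a [b [hVV hVS hVM]]]] := IH (ltnW hk).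
pose W := kermx V^T.
have W0 : W != 0.
  rewrite -mxrank_eq0 mxrank_ker mxrank_tr subn_eq0 -ltnNge.
  exact: leq_ltn_trans (rank_leq_row V) hk.
have VTS : S *m V^T = V^T *m diag_mx a.
  by rewrite -{1}hS -trmx_mul hVS trmx_mul tr_diag_mx.
have VTM : M *m V^T = V^T *m diag_mx b.
  by rewrite -{1}hM -trmx_mul hVM trmx_mul tr_diag_mx.
have WV : W *m V^T = 0 by apply/sub_kermxP.
have hWS : (W *m S <= W)%MS.
  by apply/sub_kermxP; rewrite -mulmxA VTS mulmxA WV mul0mx.
have hWM : (W *m M <= W)%MS.
  by apply/sub_kermxP; rewrite -mulmxA VTM mulmxA WV mul0mx.
have [x [x0 xW [al hxS] [be hxM]]] := common_eig hS hM hSM W0 hWS hWM.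
have xV : x *m V^T = 0 by apply/sub_kermxP.
have cpos := dot_pos x0.
set c := (x *m x^T) 0 0 in cpos.
set s := Num.sqrt c.
have s0 : s != 0 by rewrite /s sqrtr_eq0 -ltNge.
pose u := s^-1 *: x.
have uu : u *m u^T = 1%:M.
  apply/matrixP => i j; rewrite !ord1 /u linearZ /= -scalemxAl -scalemxAr scalerA.
  rewrite mxE -/c [RHS]mxE eqxx mulr1n -[c](@sqr_sqrtr _ c) ?ltW // -/s.
  by rewrite -expr2 -exprMn mulVf // expr1n.
have uV : u *m V^T = 0 by rewrite /u -scalemxAl xV scaler0.
have VuT : V *m u^T = 0 by rewrite -(trmxK V) -trmx_mul uV trmx0.
have diag1 : forall t : R, diag_mx (t%:M : 'rV_1) = t%:M.
  by move=> t; apply/matrixP => i j; rewrite !ord1 !mxE.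
suff : exists (V0 : 'M_(1 + k,n)) (a0 b0 : 'rV[R]_(1 + k)),
  [/\ V0 *m V0^T = 1%:M, V0 *m S = diag_mx a0 *m V0 & V0 *m M = diag_mx b0 *m V0] by [].
exists (col_mx u V), (row_mx al%:M a), (row_mx be%:M b); split.
- by rewrite tr_col_mx mul_col_row hVV uu uV VuT scalar_mx_block.
- rewrite mul_col_mx diag_mx_row mul_block_col !mul0mx addr0 add0r hVS diag1.
  by rewrite mul_scalar_mx /u -scalemxAl hxS !scalerA mulrC.
- rewrite mul_col_mx diag_mx_row mul_block_col !mul0mx addr0 add0r hVM diag1.
  by rewrite mul_scalar_mx /u -scalemxAl hxM !scalerA mulrC.
Qed.

Lemma char_poly_conj n (B D : 'M[R]_n) : B \in unitmx ->
  char_poly (invmx B *m D *m B) = char_poly D.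
Proof.
move=> Bu; rewrite /char_poly /char_poly_mx.
set pB := map_mx polyC B; set pBi := map_mx polyC (invmx B).
have hi : pBi *m pB = 1%:M by rewrite -map_mxM mulVmx // map_mx1.
rewrite {1}(_ : 'X%:M = pBi *m 'X%:M *m pB); last first.
  by rewrite scalar_mxC -mulmxA hi mulmx1.
rewrite !map_mxM -/pB -/pBi -mulmxBl -mulmxBr !det_mulmx mulrAC -det_mulmx hi.
by rewrite det1 mul1r.
Qed.

Lemma diag_pos n (Q V : 'M[R]_n) (q : 'rV_n) :
  (forall x : 'cV_n, x != 0 -> 0 < (x^T *m Q *m x) 0 0) ->
  V *m V^T = 1%:M -> V *m Q = diag_mx q *m V -> forall i, 0 < q 0 i.
Proof.
move=> hpos hVV hVQ i.
have rQ : row i V *m Q = q 0 i *: row i V.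
  by rewrite -row_mul hVQ row_mul row_diag_mx -scalemxAl -rowE.
have r1 : (row i V *m (row i V)^T) 0 0 = 1.
  have -> : (row i V *m (row i V)^T) 0 0 = (V *m V^T) i i.
    by rewrite !mxE; apply: eq_bigr => k _; rewrite !mxE.
  by rewrite hVV mxE eqxx.
have r0 : (row i V)^T != 0.
  apply/negP => /eqP h0; move: r1; rewrite h0 mulmx0 mxE => /eqP.
  by rewrite eq_sym oner_eq0.
have := hpos _ r0; rewrite trmxK rQ -scalemxAl mxE r1 mulr1 //.
Qed.
End Spec.
Unset Implicit Arguments. Set Strict Implicit. Set Printing Implicit Defensive.

Theorem mainTheorem10 (R : realType) (p : nat) (Sigma Q A : 'M[R]_p) :
  spd_mx Sigma -> spd_mx Q ->
  (A *m Sigma = Sigma *m A^T /\ Q *m A = A^T *m Q) <->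
  (exists (B D Astar : 'M[R]_p),
      [/\ B \in unitmx,
          Q = B^T *m B,
          Sigma = invmx B *m D *m invmx (B^T),
          A = invmx B *m Astar *m B
        & diag_eigen_mx (Sigma *m Q) D /\ diag_eigen_mx A Astar]).
Proof.
move=> [hSigT hSigpos] [hQT hQpos]; split; last first.
  move=> [B [D [As [Bu hQ hSig hA [[/diag_mxP [d hd] _] [/diag_mxP [e he] _]]]]]].
  have Btu : B^T \in unitmx by rewrite unitmx_tr.
  rewrite {}hd in hSig; rewrite {}he in hA.
  split.
    rewrite hA hSig !trmx_mul ?trmxK tr_diag_mx trmx_inv !mulmxA mulmxK // mulmxKV //.
    by rewrite -(mulmxA (invmx B) (diag_mx e)) diag_mxC mulmxA.
  by rewrite hA hQ !trmx_mul ?trmxK tr_diag_mx trmx_inv !mulmxA mulmxK // mulmxKV.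
move=> [hAS hQA].
have [V0 [q [_ [hV0V hV0Q _]]]] := onb hQT hQT (erefl (Q *m Q)) (leqnn p).
have [V0u _] := mulmx1_unit hV0V.
have hV0V' := mulmx1C hV0V.
have qpos := diag_pos hQpos hV0V hV0Q.
pose s := \row_j Num.sqrt (q 0 j).
have [C Cdef] : {C | C = diag_mx s *m V0} by eexists.
have Cu : C \in unitmx.
  rewrite Cdef unitmx_mul V0u andbT unitmxE det_diag unitfE; apply/prodf_neq0 => j _.
  by rewrite mxE sqrtr_eq0 -ltNge.
have hQC : Q = C^T *m C.
  rewrite Cdef trmx_mul tr_diag_mx -mulmxA (mulmxA (diag_mx s)) mulmx_diag.
  have -> : \row_j (s 0 j * s 0 j) = q.
    apply/rowP => j; rewrite !mxE -expr2 sqr_sqrtr //; exact: ltW.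
  by rewrite -hV0Q mulmxA hV0V' mul1mx.
pose M := C *m A *m invmx C.
pose S := C *m Sigma *m C^T.
have hCM : C^T *m M = A^T *m C^T.
  by rewrite /M !mulmxA -hQC hQA hQC !mulmxA mulmxK.
have Ctu : C^T \in unitmx by rewrite unitmx_tr.
have hMT : M^T = M.
  rewrite -[RHS](mulKmx Ctu) hCM /M !trmx_mul ?trmxK trmx_inv !mulmxA.
  done.
have hST : S^T = S by rewrite /S !trmx_mul trmxK hSigT mulmxA.
have hSM : S *m M = M *m S.
  rewrite /S /M !mulmxA.
  rewrite -(mulmxA _ C^T C) -hQC -(mulmxA _ Q A) hQA.
  rewrite (mulmxA _ (A^T) Q) hQC !mulmxA mulmxK //.
  rewrite (mulmxKV Cu) -(mulmxA C A Sigma) hAS !mulmxA.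
  done.
have [V [d [e [hVV hVS hVM]]]] := onb hST hMT hSM (leqnn p).
have [Vu _] := mulmx1_unit hVV.
have hVV' := mulmx1C hVV.
have [B Bdef] : {B | B = V *m C} by eexists.
have Bu : B \in unitmx by rewrite Bdef unitmx_mul Vu Cu.
have Btu : B^T \in unitmx by rewrite unitmx_tr.
have hQB : Q = B^T *m B.
  by rewrite hQC Bdef trmx_mul !mulmxA -(mulmxA _ V^T V) hVV' mulmx1.
have hD : diag_mx d = B *m Sigma *m B^T.
  have <- : V *m S *m V^T = diag_mx d by rewrite hVS -mulmxA hVV mulmx1.
  by rewrite /S Bdef trmx_mul !mulmxA.
have hSig : Sigma = invmx B *m diag_mx d *m invmx B^T.
  by rewrite hD !mulmxA mulmxK // mulVmx // mul1mx.
have MC : M *m C = C *m A by rewrite /M mulmxKV.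
have BA : B *m A = diag_mx e *m B.
  by rewrite Bdef -mulmxA -MC (mulmxA V M C) hVM -mulmxA.
have hA : A = invmx B *m diag_mx e *m B by rewrite -mulmxA -BA mulKmx.
exists B, (diag_mx d), (diag_mx e); split => //.
split; split; try exact: diag_mx_is_diag.
- rewrite hSig hQB !mulmxA mulmxKV // char_poly_conj //.
  exact: char_poly_trig (diag_mx_is_trig d).
- rewrite {1}hA char_poly_conj //; exact: char_poly_trig (diag_mx_is_trig e).
Qed.
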